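(* Let $\lambda>0$, $\gamma\ge0$ and $\omega\in[-\pi,\pi]$, and put $\delta=(\sqrt{\gamma^2+1}-1)/\gamma$ (with $\delta=0$ if $\gamma=0$). The Kullback–Leibler divergence $$KL(\mathrm{GCPC}\,\|\,\mathrm{CIPC})=\int_{-\pi}^{\pi}f_{GCPC}(\theta)\log\frac{f_{GCPC}(\theta)}{f_{CIPC}(\theta)}\,d\theta$$ between $\mathrm{GCPC}(\omega,\gamma,\lambda)$ and $\mathrm{CIPC}(\omega,\gamma)$ equals $$-\frac12\log\lambda+2\log\!\left(\frac{\sqrt{\lambda}(1-\delta^2)+1+\delta^2}{2}\right)-\log(1-\delta^2)+E_{WC}\!\left[\log\!\left(\sqrt{\gamma^2+1}-\frac{\gamma\cos\psi}{\sqrt{1+(\lambda-1)\sin^2\psi}}\right)\right],$$ where the expectation is over $\psi\sim\mathrm{WC}(0,\delta)$.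
   Context: For $\lambda>0$, $\gamma\ge0$ and $\omega\in[-\pi,\pi]$, the distribution $\mathrm{GCPC}(\omega,\gamma,\lambda)$ is the distribution on the circle with density $$f_{GCPC}(\theta)=\frac{1}{2\pi\sqrt{\lambda}\,\bigl(b\sqrt{\gamma^2+1}-\gamma\cos\phi\,\sqrt{b}\bigr)},\qquad \phi=\theta-\omega,\quad b=\cos^2\phi+\frac{\sin^2\phi}{\lambda}.$$ The distribution $\mathrm{CIPC}(\omega,\gamma)$ has density $f_{CIPC}(\theta)=\dfrac{1}{2\pi(\sqrt{\gamma^2+1}-\gamma\cos(\theta-\omega))}$. For $0\le\delta<1$, the distribution $\mathrm{WC}(0,\delta)$ has density $\dfrac{1-\delta^2}{2\pi(1+\delta^2-2\delta\cos\psi)}$ on $(-\pi,\pi]$. *)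

(* Defs.v *)
From Stdlib Require Import Reals.
From Coquelicot Require Import Coquelicot.
Open Scope R_scope.

Definition f_GCPC (omega gamma lambda theta : R) : R :=
  let phi := theta - omega in
  let b := (cos phi)^2 + (sin phi)^2 / lambda in
  1 / (2 * PI * sqrt lambda *
       (b * sqrt (gamma^2 + 1) - gamma * cos phi * sqrt b)).

Definition f_CIPC (omega gamma theta : R) : R :=
  1 / (2 * PI * (sqrt (gamma^2 + 1) - gamma * cos (theta - omega))).

Definition f_WC (delta psi : R) : R :=
  (1 - delta^2) / (2 * PI * (1 + delta^2 - 2 * delta * cos psi)).

Definition delta_of (gamma : R) : R :=
  if Req_EM_T gamma 0 then 0 else (sqrt (gamma^2 + 1) - 1) / gamma.

Definition KL_GCPC_CIPC (omega gamma lambda : R) : R :=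
  RInt (fun theta => f_GCPC omega gamma lambda theta *
          ln (f_GCPC omega gamma lambda theta / f_CIPC omega gamma theta))
       (-PI) PI.

Definition E_WC (delta : R) (h : R -> R) : R :=
  RInt (fun psi => f_WC delta psi * h psi) (-PI) PI.

(* Main.v *)
Require Import Defs.
From Stdlib Require Import Reals Lra Psatz.
From Coquelicot Require Import Coquelicot.
Open Scope R_scope.

Lemma sc x : sin x ^ 2 + cos x ^ 2 = 1.
Proof. pose proof (sin2_cos2 x). unfold Rsqr in H. lra. Qed.

Lemma rc_le r u : r * cos u <= Rabs r.
Proof. pose proof (COS_bound u).
  destruct (Rle_or_lt 0 r). rewrite Rabs_pos_eq by lra. nra.
  rewrite Rabs_left by lra. nra. Qed.

Lemma den_pos r u : -1 < r < 1 -> 0 < 1 + r^2 - 2*r*cos u.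
Proof. intros Hr. pose proof (rc_le r u).
  assert (Rabs r < 1) by (apply Rabs_def1; lra).
  pose proof (Rabs_pos r). assert (r^2 = Rabs r ^2).
  { destruct (Rle_or_lt 0 r). rewrite Rabs_pos_eq; lra. rewrite Rabs_left; lra. }
  nra. Qed.

Lemma den1_pos r u : -1 < r < 1 -> 0 < 1 - r * cos u.
Proof. intros Hr. pose proof (rc_le r u).
  assert (Rabs r < 1) by (apply Rabs_def1; lra). lra. Qed.

Lemma WC_deriv r u : -1 < r < 1 ->
  is_derive (fun u => (u + 2 * atan (r * sin u / (1 - r * cos u))) / (2*PI)) u (f_WC r u).
Proof.
  intros Hr. pose proof (den1_pos r u Hr). pose proof (den_pos r u Hr).
  pose proof PI_RGT_0.
  auto_derive. lra.
  unfold f_WC.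
  pose proof (sc u).
  set (S := sin u) in *. set (C := cos u) in *.
  assert (HS : S^2 = 1 - C^2) by lra. clearbody S C.
  field_simplify.
  - rewrite HS. field. nra.
  - repeat split; try lra. nra.
Qed.

Lemma int_WC r : -1 < r < 1 -> RInt (f_WC r) (-PI) PI = 1.
Proof.
  intros Hr. apply is_RInt_unique.
  replace 1 with (minus ((fun u => (u + 2 * atan (r * sin u / (1 - r * cos u))) / (2*PI)) PI)
     ((fun u => (u + 2 * atan (r * sin u / (1 - r * cos u))) / (2*PI)) (-PI))).
  apply (is_RInt_derive (fun u => (u + 2 * atan (r * sin u / (1 - r * cos u))) / (2*PI)) (f_WC r)). intros; apply WC_deriv; auto.
  intros x _. apply (ex_derive_continuous (f_WC r)). unfold f_WC. 
  pose proof (den_pos r x Hr). pose proof PI_RGT_0. auto_derive. nra.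
  unfold minus, plus, opp; simpl. rewrite sin_PI, sin_neg, sin_PI.
  replace (r * 0 / (1 - r * cos PI)) with 0 by (field; rewrite cos_PI; lra).
  replace (r * -0 / (1 - r * cos (-PI))) with 0 by (rewrite cos_neg, cos_PI; field; lra).
  rewrite atan_0. pose proof PI_RGT_0. field. lra.
Qed.


Lemma exRI (h : R -> R) a b : (forall x, continuous h x) -> ex_RInt h a b.
Proof. intros Hc. apply (@ex_RInt_continuous R_CompleteNormedModule). intros; apply Hc. Qed.

Lemma RInt_shift (h : R -> R) v a b : (forall x, continuous h x) ->
  RInt (fun y => h (y + v)) a b = RInt h (a + v) (b + v).
Proof.
  intros Hc. replace (a+v) with (1*a+v) by ring. replace (b+v) with (1*b+v) by ring.
  rewrite <- (RInt_comp_lin h 1 v a b).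
  - apply RInt_ext. intros. replace (1*x+v) with (x+v) by ring. unfold scal; simpl; unfold mult; simpl. ring.
  - apply exRI; auto.
Qed.

Lemma RInt_period (h : R -> R) a : (forall x, continuous h x) -> (forall x, h (x + 2*PI) = h x) ->
  RInt h a (a + 2*PI) = RInt h (-PI) PI.
Proof.
  intros Hc Hp.
  assert (K : forall a, RInt h a (a + 2*PI) = RInt h 0 (2*PI)).
  { intros b.
    rewrite <- (RInt_Chasles h b 0 (b + 2*PI)) by (apply exRI; auto).
    rewrite <- (RInt_Chasles h 0 (2*PI) (b + 2*PI)) by (apply exRI; auto).
    replace (RInt h (2*PI) (b + 2*PI)) with (RInt h 0 b).
    2:{ transitivity (RInt (fun y => h (y + 2*PI)) 0 b).
        apply RInt_ext; intros; rewrite Hp; auto. rewrite RInt_shift by auto. f_equal; ring. }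
    rewrite <- (opp_RInt_swap h b 0) by (apply exRI; auto). unfold plus, opp; simpl. ring. }
  rewrite K. rewrite <- (K (-PI)). f_equal. ring.
Qed.

Lemma RInt_shift_period (h : R -> R) w : (forall x, continuous h x) -> (forall x, h (x + 2*PI) = h x) ->
  RInt (fun t => h (t - w)) (-PI) PI = RInt h (-PI) PI.
Proof.
  intros Hc Hp. transitivity (RInt (fun t => h (t + - w)) (-PI) PI). reflexivity.
  rewrite (RInt_shift h (-w)) by auto.
  replace (PI + - w) with ((-PI + -w) + 2*PI) by ring.
  apply RInt_period; auto.
Qed.

Definition Tk (s u : R) := (2*s + 2*cos u) / (1 + s^2 + 2*s*cos u).

Lemma den_pos' s u : -1 < s < 1 -> 0 < 1 + s^2 + 2*s*cos u.
Proof. intros. pose proof (den_pos (-s) u). nra. Qed.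

Lemma fWC_cont r x : -1 < r < 1 -> continuous (f_WC r) x.
Proof. intros Hr. apply (ex_derive_continuous (f_WC r)). unfold f_WC. 
  pose proof (den_pos r x Hr). pose proof PI_RGT_0. auto_derive. nra. Qed.

Lemma DI_gen r s : -1 < r < 1 -> -1 < s < 1 -> r + s <> 0 ->
  RInt (fun u => f_WC r u * Tk s u) (-PI) PI = 2*r/(1+r*s).
Proof.
  intros Hr Hs Hrs.
  assert (H1 : 0 < 1 + r*s) by nra.
  set (a := (1+r^2+2*r*s)/((r+s)*(1+r*s))).
  set (b := -(1-r^2)/((r+s)*(1+r*s))).
  transitivity (RInt (fun u => plus (scal a (f_WC r u)) (scal b (f_WC (-s) u))) (-PI) PI).
  - apply RInt_ext. intros x _. unfold plus, scal; simpl; unfold mult; simpl.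
    unfold f_WC, Tk, a, b. pose proof (den_pos r x Hr). pose proof (den_pos' s x Hs).
    pose proof PI_RGT_0. field. repeat split; try lra. 
  - rewrite (@RInt_plus R_CompleteNormedModule). rewrite !(@RInt_scal R_CompleteNormedModule). rewrite !int_WC by lra.
    unfold plus, scal; simpl; unfold mult; simpl. unfold a, b. field. split; lra.
    apply exRI; intros; apply fWC_cont; lra.
    apply exRI; intros; apply fWC_cont; lra.
    apply (@ex_RInt_scal R_CompleteNormedModule). apply exRI; intros; apply fWC_cont; lra.
    apply (@ex_RInt_scal R_CompleteNormedModule). apply exRI; intros; apply fWC_cont; lra.
Qed.

Lemma DI_spec r : -1 < r < 1 ->
  RInt (fun u => f_WC r u * Tk (-r) u) (-PI) PI = 2*r/(1-r^2).
Proof.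
  intros Hr. pose proof PI_RGT_0.
  set (c := 2*r/(1-r^2)).
  set (g := fun u => sin u / (PI * (1 + r^2 - 2*r*cos u))).
  assert (Hd : forall u, is_derive g u (f_WC r u * Tk (-r) u - c * f_WC r u)).
  { intros u. unfold g. pose proof (den_pos r u Hr). auto_derive. nra.
    unfold f_WC, Tk, c. pose proof (sc u).
    set (S := sin u) in *. set (C := cos u) in *.
    assert (HS : S^2 = 1 - C^2) by lra. clearbody S C.
    assert (0 < 1 - r^2) by nra.
    assert (0 < PI * (1 + r^2 - 2*r*C)^2) by (apply Rmult_lt_0_compat; nra).
    assert (0 < PI^2 * (1 + r^2 - 2*r*C)^2) by (apply Rmult_lt_0_compat; nra).
    field_simplify. rewrite HS. field. split; lra. repeat split; lra. repeat split; nra. }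
  assert (Hc : forall u, continuous (fun u => f_WC r u * Tk (-r) u - c * f_WC r u) u).
  { intros u. apply (ex_derive_continuous (fun u => f_WC r u * Tk (-r) u - c * f_WC r u)).
    unfold f_WC, Tk. pose proof (den_pos r u Hr). pose proof (den_pos' (-r) u). auto_derive. 
    repeat split; nra. }
  assert (I0 : RInt (fun u => f_WC r u * Tk (-r) u - c * f_WC r u) (-PI) PI = 0).
  { apply is_RInt_unique.
    replace 0 with (minus (g PI) (g (-PI))).
    apply (is_RInt_derive g). intros; apply Hd. intros; apply Hc.
    unfold g, minus, plus, opp; simpl. rewrite sin_neg, sin_PI. field.
    rewrite cos_neg, cos_PI. split; nra. }
  assert (E : RInt (fun u => f_WC r u * Tk (-r) u) (-PI) PI =
     RInt (fun u => plus (f_WC r u * Tk (-r) u - c * f_WC r u) (scal c (f_WC r u))) (-PI) PI).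
  { apply RInt_ext. intros. unfold plus, scal; simpl; unfold mult; simpl. ring. }
  rewrite E. rewrite (@RInt_plus R_CompleteNormedModule).
  rewrite (@RInt_scal R_CompleteNormedModule). rewrite I0, int_WC by lra.
  unfold plus, scal; simpl; unfold mult; simpl. ring.
  apply exRI; intros; apply fWC_cont; lra.
  apply exRI; auto.
  apply (@ex_RInt_scal R_CompleteNormedModule). apply exRI; intros; apply fWC_cont; lra.
Qed.

Lemma DI r s : -1 < r < 1 -> -1 < s < 1 ->
  RInt (fun u => f_WC r u * Tk s u) (-PI) PI = 2*r/(1+r*s).
Proof.
  intros Hr Hs. destruct (Req_dec (r+s) 0).
  - replace s with (-r) by lra. rewrite DI_spec by auto. f_equal. ring.
  - apply DI_gen; auto.
Qed.

Lemma loc_int s : -1 < s < 1 -> locally s (fun y => -1 < y < 1).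
Proof.
  intros Hs. assert (0 < Rmin (1-s) (s+1)) by (apply Rmin_pos; lra).
  exists (mkposreal _ H). intros y Hy. 
  change (Rabs (y - s) < Rmin (1-s) (s+1)) in Hy.
  pose proof (Rmin_l (1-s) (s+1)). pose proof (Rmin_r (1-s) (s+1)).
  apply Rabs_def2 in Hy. lra.
Qed.

Lemma cont2_G r s t : -1 < r < 1 -> -1 < s < 1 ->
  continuity_2d_pt (fun u v => f_WC r v * ((2*u + 2*cos v) * / (1 + u*u + 2*u*cos v))) s t.
Proof.
  intros Hr Hs.
  assert (Cc : continuity_2d_pt (fun u v => cos v) s t).
  { apply (continuity_1d_2d_pt_comp cos (fun u v => v)). apply continuity_cos.
    apply continuity_2d_pt_id2. }
  apply continuity_2d_pt_mult.
  - apply (continuity_1d_2d_pt_comp (f_WC r) (fun u v => v)).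
    apply continuity_pt_filterlim. apply fWC_cont; auto. apply continuity_2d_pt_id2.
  - apply continuity_2d_pt_mult.
    + apply continuity_2d_pt_plus. apply continuity_2d_pt_mult. apply continuity_2d_pt_const.
      apply continuity_2d_pt_id1. apply continuity_2d_pt_mult. apply continuity_2d_pt_const. auto.
    + apply continuity_2d_pt_inv.
      apply continuity_2d_pt_plus. apply continuity_2d_pt_plus. apply continuity_2d_pt_const.
      apply continuity_2d_pt_mult; apply continuity_2d_pt_id1.
      apply continuity_2d_pt_mult. apply continuity_2d_pt_mult. apply continuity_2d_pt_const.
      apply continuity_2d_pt_id1. auto.
      pose proof (den_pos' s t Hs). nra.
Qed.

Lemma loc2 s t : -1 < s < 1 -> locally_2d (fun u v => -1 < u < 1) s t.
Proof.
  intros Hs. assert (0 < Rmin (1-s) (s+1)) by (apply Rmin_pos; lra).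
  exists (mkposreal _ H). intros u v Hu _. simpl in Hu.
  pose proof (Rmin_l (1-s) (s+1)). pose proof (Rmin_r (1-s) (s+1)).
  apply Rabs_def2 in Hu. lra.
Qed.

Definition Phi r s := RInt (fun u => f_WC r u * ln (1 + s^2 + 2*s*cos u)) (-PI) PI.

Lemma Phi_deriv r s : -1 < r < 1 -> -1 < s < 1 -> is_derive (Phi r) s (2*r/(1+r*s)).
Proof.
  intros Hr Hs.
  pose (f := fun s u => f_WC r u * ln (1 + s^2 + 2*s*cos u)).
  assert (Hd : forall y u, -1 < y < 1 -> is_derive (fun z => f z u) y (f_WC r u * Tk y u)).
  { intros y u Hy. unfold f, Tk. pose proof (den_pos' y u Hy). auto_derive. lra. field. lra. }
  assert (Hfc : forall y u, -1 < y < 1 -> continuous (fun u => f y u) u).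
  { intros y u Hy. apply (ex_derive_continuous (fun u => f y u)). unfold f, f_WC.
    pose proof (den_pos' y u Hy). pose proof (den_pos r u Hr). pose proof PI_RGT_0.
    auto_derive. repeat split; nra. }
  assert (P := is_derive_RInt_param f (-PI) PI s).
  rewrite <- (DI r s) by auto.
  replace (RInt (fun u => f_WC r u * Tk s u) (-PI) PI) with
    (RInt (fun t => Derive (fun u => f u t) s) (-PI) PI).
  apply P.
  - apply (filter_imp (fun y => -1 < y < 1)). intros y Hy t _. eexists; apply Hd; auto.
    apply loc_int; auto.
  - intros t _. 
    apply (continuity_2d_pt_ext_loc (fun u v => f_WC r v * ((2*u + 2*cos v) * / (1 + u*u + 2*u*cos v)))).
    + destruct (loc2 s t Hs) as [d Hdl]. exists d. intros u v Hu Hv.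
      transitivity (f_WC r v * Tk u v). unfold Tk, Rdiv. f_equal. f_equal. f_equal. ring.
      symmetry. apply is_derive_unique. apply Hd. eauto.
    + apply cont2_G; auto.
  - apply (filter_imp (fun y => -1 < y < 1)). intros y Hy. apply exRI. intros; apply Hfc; auto.
    apply loc_int; auto.
  - apply RInt_ext. intros x _. apply is_derive_unique. apply Hd; auto.
Qed.

Lemma key r s : -1 < r < 1 -> -1 < s < 1 ->
  RInt (fun u => f_WC r u * ln (1 + s^2 + 2*s*cos u)) (-PI) PI = 2 * ln (1 + r*s).
Proof.
  intros Hr Hs. fold (Phi r s).
  pose (H := fun y => Phi r y - 2 * ln (1 + r*y)).
  assert (HD : forall y, -1 < y < 1 -> is_derive H y 0).
  { intros y Hy. unfold H. assert (0 < 1 + r*y) by nra.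
    replace 0 with (2*r/(1+r*y) - 2 * (r / (1 + r*y))) by (field; lra).
    apply (is_derive_minus (Phi r) (fun y => 2 * ln (1 + r*y))). apply Phi_deriv; auto.
    auto_derive. lra. field. lra. }
  destruct (MVT_gen H 0 s (fun _ => 0)) as [c [Hc E]].
  - intros x Hx. apply HD. 
    unfold Rmin, Rmax in *. destruct (Rle_dec 0 s); lra.
  - intros x Hx. apply continuity_pt_filterlim. apply (ex_derive_continuous H).
    eexists. apply HD. pose proof (Rmin_l 0 s). pose proof (Rmin_r 0 s).
    pose proof (Rmax_l 0 s). pose proof (Rmax_r 0 s). 
    unfold Rmin, Rmax in *. destruct (Rle_dec 0 s); lra.
  - assert (H0 : H 0 = 0).
    { unfold H, Phi. replace (1 + r*0) with 1 by ring. rewrite ln_1.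
      rewrite <- (RInt_ext (fun _ => 0)). rewrite RInt_const. change (scal (PI - - PI) 0) with ((PI - - PI) * 0). ring.
      intros. replace (1 + 0^2 + 2*0*cos x) with 1 by ring. rewrite ln_1, Rmult_0_r. reflexivity. }
    unfold H in E, H0. lra.
Qed.

Lemma plusR (a b : R) : plus a b = a + b. Proof. reflexivity. Qed.
Lemma scalR (a b : R) : scal a b = a * b. Proof. reflexivity. Qed.

Lemma cmult (f g : R -> R) x : continuous f x -> continuous g x -> continuous (fun y => f y * g y) x.
Proof. intros. apply (@continuous_mult R_UniformSpace R_AbsRing f g x); auto. Qed.
Lemma cplus (f g : R -> R) x : continuous f x -> continuous g x -> continuous (fun y => f y + g y) x.
Proof. intros. apply (@continuous_plus R_UniformSpace R_AbsRing R_NormedModule f g x); auto. Qed.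
Lemma ccomp (f g : R -> R) x : continuous f x -> continuous g (f x) -> continuous (fun y => g (f y)) x.
Proof. intros. apply (@continuous_comp R_UniformSpace R_UniformSpace R_UniformSpace f g x); auto. Qed.
Lemma cconst (c x : R) : continuous (fun _ : R => c) x.
Proof. apply (@continuous_const R_UniformSpace R_UniformSpace). Qed.

Lemma fold2 r (F : R -> R) : -1 < r < 1 -> (forall x, continuous F x) -> (forall x, F (x + 2*PI) = F x) ->
  RInt (fun u => f_WC r u * F (2*u)) (-PI) PI = RInt (fun v => f_WC (r^2) v * F v) (-PI) PI.
Proof.
  intros Hr Fc Fp. pose proof PI_RGT_0.
  assert (Hr2 : -1 < r^2 < 1) by nra.
  set (h := fun v => f_WC r (v/2) * F v / 2).
  assert (hc : forall x, continuous h x).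
  { intros x. unfold h, Rdiv at 2. apply (cmult (fun v => f_WC r (v/2) * F v) (fun _ => /2)).
    apply (cmult (fun v => f_WC r (v/2)) F).
    apply (ccomp (fun v => v/2) (f_WC r)).
    apply (ex_derive_continuous (fun v => v/2)). auto_derive. auto.
    apply fWC_cont; auto. auto. apply cconst. }
  transitivity (RInt h (-2*PI) (2*PI)).
  { replace (RInt h (-2*PI) (2*PI)) with (RInt h (2*(-PI)+0) (2*PI+0)) by (f_equal; ring).
    rewrite <- (RInt_comp_lin h 2 0). apply RInt_ext. intros x _. unfold h, scal; simpl; unfold mult; simpl.
    replace ((2*x+0)/2) with x by field. replace (2*x+0) with (2*x) by ring. field.
    apply exRI; auto. }
  rewrite <- (RInt_Chasles h (-2*PI) 0 (2*PI)) by (apply exRI; auto).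
  replace (RInt h (-2*PI) 0) with (RInt (fun y => h (y + -(2*PI))) 0 (2*PI)).
  2:{ rewrite RInt_shift by auto. f_equal; ring. }
  rewrite <- (@RInt_plus R_CompleteNormedModule (fun y => h (y + -(2*PI))) h) by (apply exRI; auto; intros; apply (continuous_comp (fun y => y + -(2*PI)) h); auto;
     apply (ex_derive_continuous (fun y => y + -(2*PI))); auto_derive; auto).
  rewrite <- (RInt_period _ 0).
  - replace (0 + 2*PI) with (2*PI) by ring. apply RInt_ext. intros x _.
    unfold h, plus; simpl. replace (x + - (2*PI)) with (x - 2*PI) by ring.
    assert (E1 : F (x - 2*PI) = F x) by (rewrite <- (Fp (x - 2*PI)); f_equal; ring).
    rewrite E1. unfold f_WC.
    replace ((x - 2*PI)/2) with (x/2 + -PI) by field.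
    rewrite cos_plus, cos_neg, sin_neg, cos_PI, sin_PI.
    assert (Ex : cos x = 2*cos (x/2)*cos(x/2) - 1) by (rewrite <- cos_2a_cos; f_equal; field).
    rewrite Ex. pose proof (den_pos r (x/2) Hr). pose proof (den_pos' r (x/2) Hr).
    field. repeat split; nra.
  - intros x. apply cmult. apply fWC_cont; auto. auto.
  - intros x. rewrite Fp. f_equal. unfold f_WC. rewrite cos_plus, cos_2PI, sin_2PI. f_equal. f_equal. f_equal. ring.
Qed.

Lemma exRI_WC r (F : R -> R) : -1 < r < 1 -> (forall x, continuous F x) ->
  ex_RInt (fun u => f_WC r u * F u) (-PI) PI.
Proof. intros. apply exRI. intros; apply cmult; auto. apply fWC_cont; auto. Qed.

Lemma intA d : -1 < d < 1 ->
  RInt (fun u => f_WC d u * ln ((1 + d^2 - 2*d*cos u)/(1 - d^2))) (-PI) PI = ln (1 - d^2).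
Proof.
  intros Hd. assert (0 < 1 - d^2) by nra.
  transitivity (RInt (fun u => plus (f_WC d u * ln (1 + (-d)^2 + 2*(-d)*cos u)) (scal (- ln (1-d^2)) (f_WC d u))) (-PI) PI).
  - apply RInt_ext. intros x _. 
    pose proof (den_pos d x Hd). rewrite ln_div by auto.
    replace (1 + (-d)^2 + 2*(-d)*cos x) with (1 + d^2 - 2*d*cos x) by ring.
    unfold plus, scal; simpl; unfold mult; simpl. ring.
  - rewrite (@RInt_plus R_CompleteNormedModule).
    rewrite (@RInt_scal R_CompleteNormedModule). rewrite key, int_WC by lra.
    replace (1 + d * - d) with (1 - d^2) by ring.
    unfold plus, scal; simpl; unfold mult; simpl. ring.
    apply exRI; intros; apply fWC_cont; lra.
    apply exRI_WC. lra. intros x. apply (ex_derive_continuous (fun u => ln (1 + (-d)^2 + 2*(-d)*cos u))).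
    pose proof (den_pos' (-d) x). auto_derive. nra.
    apply (@ex_RInt_scal R_CompleteNormedModule). apply exRI; intros; apply fWC_cont; lra.
Qed.

Lemma intB d L : -1 < d < 1 -> 0 < L ->
  RInt (fun u => f_WC d u * ln (cos u ^ 2 + L * sin u ^ 2)) (-PI) PI
  = 2 * ln ((sqrt L * (1 - d^2) + 1 + d^2) / 2).
Proof.
  intros Hd HL. pose proof (sqrt_lt_R0 L HL) as Hm. pose proof (sqrt_sqrt L (Rlt_le _ _ HL)) as Hm2.
  set (m := sqrt L) in *.
  set (q := (1 - m)/(1 + m)). set (K := (1+m)^2/4).
  assert (Hq : -1 < q < 1). { unfold q. split. apply Rmult_lt_reg_r with (1+m). lra.
      field_simplify; lra. apply Rmult_lt_reg_r with (1+m). lra. field_simplify; lra. }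
  assert (HK : 0 < K) by (unfold K; nra).
  set (F := fun v => ln (1 + q^2 + 2*q*cos v)).
  assert (Fc : forall x, continuous F x).
  { intros x. apply (ex_derive_continuous F). unfold F. pose proof (den_pos' q x Hq). auto_derive. nra. }
  assert (Fp : forall x, F (x + 2*PI) = F x).
  { intros x. unfold F. rewrite cos_plus, cos_2PI, sin_2PI. f_equal. ring. }
  assert (d2 : -1 < d^2 < 1) by nra.
  transitivity (RInt (fun u => plus (scal (ln K) (f_WC d u)) (f_WC d u * F (2*u))) (-PI) PI).
  - apply RInt_ext. intros x _.
    assert (E : ln (cos x ^ 2 + L * sin x ^ 2) = ln K + F (2*x)).
    { unfold F. pose proof (den_pos' q (2*x) Hq). rewrite <- ln_mult by auto. f_equal.
      rewrite cos_2a.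
      transitivity (K*((1+q^2)*(sin x^2 + cos x^2) + 2*q*(cos x*cos x - sin x * sin x))).
      unfold K, q. rewrite <- Hm2. field. lra.
      rewrite sc. ring. }
    rewrite E. unfold plus, scal; simpl; unfold mult; simpl. ring.
  - rewrite (@RInt_plus R_CompleteNormedModule).
    rewrite (@RInt_scal R_CompleteNormedModule). rewrite int_WC by lra.
    rewrite fold2 by auto. unfold F. rewrite key by auto.
    assert (EK : K = ((1+m)/2)^2) by (unfold K; field).
    assert (0 < 1 + d^2 * q) by nra.
    rewrite EK, ln_pow by lra. simpl INR.
    replace ((m * (1 - d^2) + 1 + d^2)/2) with ((1+m)/2 * (1 + d^2*q)) by (unfold q; field; lra).
    rewrite ln_mult by nra.
    unfold plus, scal; simpl; unfold mult; simpl. ring.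
    apply exRI; intros; apply fWC_cont; lra.
    apply (@ex_RInt_scal R_CompleteNormedModule). apply exRI; intros; apply fWC_cont; lra.
    apply exRI_WC. lra. intros x. apply (ccomp (fun u => 2*u) F); auto.
    apply (ex_derive_continuous (fun u => 2*u)). auto_derive. auto.
Qed.

Definition Wf (L u : R) := cos u ^ 2 + L * sin u ^ 2.
Definition ang (L u : R) := u + atan ((sqrt L - 1) * sin u * cos u / (cos u ^ 2 + sqrt L * sin u ^ 2)).

Lemma Wpos L u : 0 < L -> 0 < Wf L u.
Proof. intros HL. unfold Wf. pose proof (sc u).
  destruct (Rle_or_lt 1 L). nra. nra. Qed.

Lemma ang_deriv L u : 0 < L -> is_derive (ang L) u (sqrt L / Wf L u).
Proof.
  intros HL. unfold ang, Wf. pose proof (sqrt_lt_R0 L HL) as Hm. pose proof (sqrt_sqrt L (Rlt_le _ _ HL)) as Hm2.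
  set (m := sqrt L) in *. pose proof (Wpos m u Hm) as Dp. pose proof (Wpos L u HL) as Wp. unfold Wf in *.
  auto_derive. lra.
  pose proof (sc u).
  set (S := sin u) in *. set (C := cos u) in *.
  assert (HS : S^2 = 1 - C^2) by lra. clearbody S C. rewrite <- Hm2.
  assert (Wm : 0 < C^2 + m*m*S^2) by (rewrite Hm2; auto).
  field_simplify.
  - replace (S^4) with ((S^2)^2) by ring. rewrite HS. field.
    intro Z. rewrite HS in Wm. nra.
  - nra.
  - split; nra.
Qed.

Lemma ang_PI L : ang L PI = PI.
Proof. unfold ang. rewrite sin_PI. replace ((sqrt L - 1) * 0 * cos PI / (cos PI ^ 2 + sqrt L * 0 ^ 2)) with 0.
  rewrite atan_0. ring. rewrite cos_PI. field. Qed.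

Lemma ang_mPI L : ang L (-PI) = -PI.
Proof. unfold ang. rewrite sin_neg, sin_PI. replace ((sqrt L - 1) * - 0 * cos (-PI) / (cos (-PI) ^ 2 + sqrt L * (-0) ^ 2)) with 0.
  rewrite atan_0. ring. rewrite cos_neg, cos_PI. field. Qed.

Lemma cos_ang L u : 0 < L -> cos (ang L u) = cos u / sqrt (Wf L u).
Proof.
  intros HL. unfold ang. pose proof (sqrt_lt_R0 L HL) as Hm. pose proof (sqrt_sqrt L (Rlt_le _ _ HL)) as Hm2.
  pose proof (Wpos L u HL) as Wp.
  set (m := sqrt L) in *. pose proof (Wpos m u Hm) as Dp. unfold Wf in *.
  rewrite cos_plus, cos_atan, sin_atan.
  set (x := (m - 1) * sin u * cos u / (cos u ^ 2 + m * sin u ^ 2)).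
  assert (E : 1 + x² = (cos u ^ 2 + L * sin u ^ 2) / ((cos u ^ 2 + m * sin u ^ 2) * (cos u ^ 2 + m * sin u ^ 2))).
  { unfold x, Rsqr.
    pose proof (sc u).
    set (S := sin u) in *. set (C := cos u) in *. 
    assert (HS : S^2 = 1 - C^2) by lra. clearbody S C. rewrite <- Hm2.
    field_simplify; try lra.
    replace (m ^ 2 * S ^ 4 + m ^ 2 * S ^ 2 * C ^ 2 + S ^ 2 * C ^ 2 + C ^ 4) with ((m^2*S^2+C^2)*(S^2+C^2)) by ring.
    rewrite H. f_equal. ring. }
  rewrite E. rewrite sqrt_div_alt by nra. rewrite sqrt_square by lra.
  pose proof (sqrt_lt_R0 _ Wp). unfold x. pose proof (sc u). field_simplify.
  replace (cos u ^ 3 + cos u * sin u ^ 2) with (cos u * (sin u ^ 2 + cos u ^ 2)) by ring.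
  rewrite H0. field. lra. lra. split; lra.
Qed.

Lemma c0_facts g : 0 <= g -> 0 < sqrt (g^2+1) /\ sqrt (g^2+1) ^ 2 = g^2 + 1 /\ g < sqrt (g^2+1) /\ 1 <= sqrt (g^2+1).
Proof.
  intros Hg. assert (0 < g^2+1) by nra. pose proof (sqrt_lt_R0 _ H).
  pose proof (pow2_sqrt (g^2+1) (Rlt_le _ _ H)). repeat split; auto; nra.
Qed.

Lemma bq_pos L p : 0 < L -> 0 < cos p ^ 2 + sin p ^ 2 / L.
Proof. intros HL. pose proof (Wpos L p HL). unfold Wf in H.
  replace (cos p ^ 2 + sin p ^ 2 / L) with ((L * cos p ^ 2 + sin p ^ 2) / L) by (field; lra).
  apply Rdiv_lt_0_compat; auto. pose proof (sc p). destruct (Rle_or_lt 1 L); nra. Qed.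

Lemma denG_pos g L p : 0 <= g -> 0 < L ->
  0 < (cos p ^ 2 + sin p ^ 2 / L) * sqrt (g^2+1) - g * cos p * sqrt (cos p ^ 2 + sin p ^ 2 / L).
Proof.
  intros Hg HL. destruct (c0_facts g Hg) as [c0p [c02 [c0g c01]]].
  pose proof (bq_pos L p HL) as Hb.
  set (b := cos p ^ 2 + sin p ^ 2 / L) in *. set (c0 := sqrt (g^2+1)) in *.
  pose proof (sqrt_lt_R0 _ Hb) as sb. pose proof (sqrt_sqrt _ (Rlt_le _ _ Hb)) as sb2.
  assert (Cb : cos p ^ 2 <= b). { unfold b. assert (0 <= sin p ^ 2 / L).
     apply Rdiv_le_0_compat; auto. nra. lra. }
  assert (Cs : g * cos p <= g * sqrt b).
  { apply Rmult_le_compat_l; auto. destruct (Rle_or_lt (cos p) 0). lra.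
    nra. }
  replace (b * c0 - g * cos p * sqrt b) with (sqrt b * (sqrt b * c0 - g * cos p)) 
    by (assert (b * c0 = sqrt b * sqrt b * c0) by (rewrite sb2; ring); rewrite H; ring).
  apply Rmult_lt_0_compat; auto. nra.
Qed.

Lemma fG_pos g L p : 0 <= g -> 0 < L -> 0 < f_GCPC 0 g L p.
Proof.
  intros Hg HL. unfold f_GCPC. rewrite Rminus_0_r. pose proof (denG_pos g L p Hg HL).
  pose proof (sqrt_lt_R0 L HL). pose proof PI_RGT_0.
  apply Rdiv_lt_0_compat. lra. apply Rmult_lt_0_compat; auto. apply Rmult_lt_0_compat; auto. lra.
Qed.

Lemma fC_pos g p : 0 <= g -> 0 < f_CIPC 0 g p.
Proof.
  intros Hg. unfold f_CIPC. rewrite Rminus_0_r. destruct (c0_facts g Hg) as [c0p [c02 [c0g c01]]].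
  pose proof (COS_bound p). pose proof PI_RGT_0.
  apply Rdiv_lt_0_compat. lra. apply Rmult_lt_0_compat. lra. nra.
Qed.

Lemma fG_der g L p : 0 <= g -> 0 < L -> ex_derive (f_GCPC 0 g L) p.
Proof.
  intros Hg HL. pose proof (denG_pos g L p Hg HL). pose proof (bq_pos L p HL).
  pose proof (sqrt_lt_R0 L HL). pose proof PI_RGT_0.
  unfold f_GCPC. auto_derive. rewrite Ropp_0, Rplus_0_r.
  simpl in H, H0. unfold Rdiv in H, H0. split. lra. split; auto.
  apply Rgt_not_eq. apply Rmult_lt_0_compat. apply Rmult_lt_0_compat; auto; lra. lra.
Qed.

Lemma fC_der g p : 0 <= g -> ex_derive (f_CIPC 0 g) p.
Proof.
  intros Hg. pose proof (fC_pos g p Hg). unfold f_CIPC in *. rewrite Rminus_0_r in H.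
  auto_derive. rewrite Ropp_0, Rplus_0_r.
  intro Z. assert (2 * PI * (sqrt (g ^ 2 + 1) - g * cos p) = 0) by (simpl; rewrite <- Z; ring).
  rewrite H0 in H. unfold Rdiv in H. rewrite Rinv_0 in H. lra.
Qed.

Definition F0 g L p := f_GCPC 0 g L p * ln (f_GCPC 0 g L p / f_CIPC 0 g p).

Lemma F0_cont g L p : 0 <= g -> 0 < L -> continuous (F0 g L) p.
Proof.
  intros Hg HL. apply (ex_derive_continuous (F0 g L)). unfold F0.
  pose proof (fG_der g L p Hg HL) as [dG HG]. pose proof (fC_der g p Hg) as [dC HC].
  pose proof (fG_pos g L p Hg HL). pose proof (fC_pos g p Hg).
  eexists. apply (is_derive_mult (f_GCPC 0 g L)). exact HG.
  apply (is_derive_comp ln (fun p => f_GCPC 0 g L p / f_CIPC 0 g p)).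
  apply is_derive_ln. apply Rdiv_lt_0_compat; auto.
  apply (is_derive_div (f_GCPC 0 g L)). exact HG. exact HC. lra.
  intros; apply Rmult_comm.
Qed.


Lemma F0_per g L x : F0 g L (x + 2*PI) = F0 g L x.
Proof.
  assert (Cc : cos (x + 2*PI - 0) = cos (x - 0)) by (rewrite !Rminus_0_r, cos_plus, cos_2PI, sin_2PI; ring).
  assert (Ss : sin (x + 2*PI - 0) = sin (x - 0)) by (rewrite !Rminus_0_r, sin_plus, cos_2PI, sin_2PI; ring).
  assert (Cc' : cos (x + 2*PI) = cos x) by (rewrite cos_plus, cos_2PI, sin_2PI; ring).
  unfold F0, f_GCPC, f_CIPC. cbv zeta. rewrite Cc, Ss. reflexivity.
Qed.

Lemma KL_shift g L w : 0 <= g -> 0 < L ->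
  KL_GCPC_CIPC w g L = RInt (F0 g L) (-PI) PI.
Proof.
  intros Hg HL. unfold KL_GCPC_CIPC.
  rewrite <- (RInt_shift_period (F0 g L) w).
  - apply RInt_ext. intros x _. unfold F0, f_GCPC, f_CIPC. rewrite !Rminus_0_r. reflexivity.
  - intros; apply F0_cont; auto.
  - apply F0_per.
Qed.

Lemma delta_facts g : 0 <= g -> let d := delta_of g in
  0 <= d < 1 /\ forall C, sqrt (g^2+1) - g * C = (1 + d^2 - 2*d*C)/(1 - d^2).
Proof.
  intros Hg d. destruct (c0_facts g Hg) as [c0p [c02 [c0g c01]]].
  unfold d, delta_of. destruct (Req_EM_T g 0) as [E|E].
  - subst g. split. lra. intros C. replace (0^2+1) with 1 by ring. rewrite sqrt_1. field.
  - set (c0 := sqrt (g^2+1)) in *. assert (gp : 0 < g) by lra.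
    assert (F1 : (c0 - 1)/g * g = c0 - 1) by (field; lra).
    set (dd := (c0 - 1)/g) in *.
    assert (dd < 1). { unfold dd. apply Rmult_lt_reg_r with g; auto. field_simplify; try lra. nra. }
    assert (0 <= dd) by (unfold dd; apply Rdiv_le_0_compat; lra).
    split. lra. intros C. apply Rmult_eq_reg_r with (1 - dd^2). 2: nra.
    field_simplify. 2: nra.
    apply Rmult_eq_reg_r with g. 2: lra.
    apply Rminus_diag_uniq.
    transitivity (g*(c0-1) - (c0+1)*dd*(dd*g) + C*((dd*g)^2 - g^2 + 2*(dd*g))). ring.
    assert (F2 : (c0+1)*dd = g).
    { unfold dd. replace ((c0+1)*((c0-1)/g)) with ((c0^2-1)/g) by (field; lra).
      replace (c0^2-1) with (g^2) by lra. field; lra. }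
    rewrite F1. replace (g^2) with (c0^2 - 1) by lra.
    replace (g*(c0-1)) with ((c0+1)*dd*(c0-1)) by (rewrite <- F2; ring). ring.
Qed.

Lemma ratio_le1 C W : 0 < W -> C^2 <= W -> C / sqrt W <= 1.
Proof.
  intros HW HC. pose proof (sqrt_lt_R0 _ HW). apply (Rmult_le_reg_r (sqrt W)); auto.
  field_simplify; try lra. destruct (Rle_or_lt C 0). lra.
  rewrite <- (sqrt_pow2 C) by lra. apply sqrt_le_1_alt. lra.
Qed.

Lemma ln_sqrt' x : 0 < x -> ln (sqrt x) = ln x / 2.
Proof. intros. pose proof (sqrt_lt_R0 _ H). rewrite <- (sqrt_sqrt x) at 2 by lra.
  rewrite ln_mult by auto. field. Qed.

Lemma point g L u : 0 <= g -> 0 < L ->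
 sqrt L / Wf L u * F0 g L (ang L u) =
 f_WC (delta_of g) u * ( -(1/2) * ln L + ln (Wf L u) - ln ((1 + (delta_of g)^2 - 2*(delta_of g)*cos u)/(1-(delta_of g)^2))
     + ln (sqrt (g^2+1) - g * cos u / sqrt (1 + (L - 1) * sin u ^ 2))).
Proof.
  intros Hg HL. destruct (delta_facts g Hg) as [Hd Hrel]. set (d := delta_of g) in *.
  destruct (c0_facts g Hg) as [c0p [c02 [c0g c01]]]. set (c0 := sqrt (g^2+1)) in *.
  pose proof (Wpos L u HL) as Wp. pose proof (sqrt_lt_R0 _ Wp) as sWp.
  pose proof (sqrt_lt_R0 _ HL) as sLp.
  pose proof (cos_ang L u HL) as Hc. set (P := ang L u) in *.
  pose proof (sc u) as scu.
  assert (EW : 1 + (L - 1) * sin u ^ 2 = Wf L u) by (unfold Wf; nra).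
  rewrite EW.
  assert (CW : cos u ^2 <= Wf L u). { unfold Wf. pose proof (pow2_ge_0 (sin u)). nra. }
  set (W := Wf L u) in *.
  assert (Hb : cos P ^ 2 + sin P ^ 2 / L = / W).
  { assert (sin P ^ 2 = 1 - cos P ^ 2) by (pose proof (sc P); lra).
    rewrite H, Hc. unfold Rdiv. rewrite Rpow_mult_distr, pow_inv, pow2_sqrt by lra.
    assert (W - cos u^2 = L * sin u ^ 2) by (unfold W, Wf; ring).
    field_simplify; try lra.
    replace (cos u ^ 2 * L - cos u ^ 2 + W) with (L * (sin u ^2 + cos u ^2)) by lra.
    rewrite scu. field. lra. }
  assert (Hsb : sqrt (cos P ^ 2 + sin P ^ 2 / L) = / sqrt W).
  { rewrite Hb. apply sqrt_inv. }
  set (A := c0 - g * cos u).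
  assert (Ap : 0 < A). { unfold A. pose proof (COS_bound u). nra. }
  set (B := c0 - g * (cos u / sqrt W)).
  assert (Bp : 0 < B). { unfold B. pose proof (ratio_le1 (cos u) W Wp CW). nra. }
  assert (EG : f_GCPC 0 g L P = W / (2 * PI * sqrt L * A)).
  { unfold f_GCPC. cbv zeta. rewrite Rminus_0_r. rewrite Hsb, Hb, Hc. fold c0. unfold A.
    pose proof PI_RGT_0. assert (SW : sqrt W * sqrt W = W) by (apply sqrt_sqrt; lra).
    replace (g * (cos u / sqrt W) * / sqrt W) with (g*cos u / (sqrt W * sqrt W)) by (field; lra).
    rewrite SW. assert (0 < c0 - g * cos u) by exact Ap. unfold A. field. repeat split; lra. }
  assert (EC : f_CIPC 0 g P = 1 / (2 * PI * B)).
  { unfold f_CIPC. rewrite Rminus_0_r, Hc. reflexivity. }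
  unfold F0. rewrite EG, EC.
  pose proof PI_RGT_0.
  replace (W / (2 * PI * sqrt L * A) / (1 / (2 * PI * B))) with (W * B / (sqrt L * A)) by (field; repeat split; lra).
  rewrite ln_div, !ln_mult, ln_sqrt' by (try apply Rmult_lt_0_compat; lra).
  rewrite <- (Hrel (cos u)). fold A. fold B.
  unfold f_WC. replace ((1 - d^2) / (2 * PI * (1 + d^2 - 2 * d * cos u))) with (1 / (2 * PI * A)).
  replace (c0 - g * cos u / sqrt W) with B by (unfold B; field; lra). field. repeat split; lra.
  unfold A. rewrite Hrel. assert (0 < 1 - d^2) by nra. assert (0 < 1 + d^2 - 2*d*cos u) by (apply den_pos; lra).
  field. repeat split; lra.
Qed.

Lemma Bpos g L u : 0 <= g -> 0 < L -> 0 < sqrt (g^2+1) - g * cos u / sqrt (1 + (L - 1) * sin u ^ 2).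
Proof.
  intros Hg HL. destruct (c0_facts g Hg) as [c0p [c02 [c0g c01]]].
  pose proof (Wpos L u HL) as Wp. pose proof (sc u).
  assert (EW : 1 + (L - 1) * sin u ^ 2 = Wf L u) by (unfold Wf; nra).
  rewrite EW.
  assert (CW : cos u ^2 <= Wf L u). { unfold Wf. pose proof (pow2_ge_0 (sin u)). nra. }
  pose proof (ratio_le1 (cos u) _ Wp CW).
  replace (g * cos u / sqrt (Wf L u)) with (g * (cos u / sqrt (Wf L u))) by (unfold Rdiv; ring). nra.
Qed.

Theorem mainTheorem6 (lambda gamma omega : R)
  (Hlambda : 0 < lambda) (Hgamma : 0 <= gamma)
  (Homega : -PI <= omega <= PI) :
  let delta := delta_of gamma in
  KL_GCPC_CIPC omega gamma lambda =
    - (1/2) * ln lambda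
    + 2 * ln ((sqrt lambda * (1 - delta^2) + 1 + delta^2) / 2)
    - ln (1 - delta^2)
    + E_WC delta (fun psi =>
        ln (sqrt (gamma^2 + 1) -
            gamma * cos psi / sqrt (1 + (lambda - 1) * (sin psi)^2))).
Proof.
  intros delta. set (g := gamma) in *. set (L := lambda) in *.
  destruct (delta_facts g Hgamma) as [Hd Hrel]. fold delta in Hd, Hrel.
  assert (Hd' : -1 < delta < 1) by lra.
  rewrite KL_shift by auto.
  rewrite <- (ang_PI L) at 2. rewrite <- (ang_mPI L) at 1.
  rewrite <- (RInt_comp (F0 g L) (ang L) (fun u => sqrt L / Wf L u)).
  2:{ intros; apply F0_cont; auto. }
  2:{ intros x _. split. apply ang_deriv; auto.
      apply (ex_derive_continuous (fun u => sqrt L / Wf L u)). unfold Wf.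
      pose proof (Wpos L x Hlambda). unfold Wf in H. auto_derive. lra. }
  set (e := fun psi => ln (sqrt (g^2 + 1) - g * cos psi / sqrt (1 + (L - 1) * (sin psi)^2))).
  assert (Ce : forall x, continuous e x).
  { intros x. apply (ex_derive_continuous e). unfold e.
    pose proof (Bpos g L x Hgamma Hlambda). pose proof (Wpos L x Hlambda). unfold Wf in H0.
    assert (0 < 1 + (L - 1) * sin x ^ 2) by (pose proof (sc x); nra).
    auto_derive. simpl in H, H1. unfold Rdiv in H. repeat split; try lra.
    apply Rgt_not_eq. apply sqrt_lt_R0. lra. }
  assert (CW : forall x, continuous (fun u => ln (Wf L u)) x).
  { intros x. apply (ex_derive_continuous (fun u => ln (Wf L u))). pose proof (Wpos L x Hlambda).
    unfold Wf in *. auto_derive. simpl in H. lra. }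
  assert (CA : forall x, continuous (fun u => ln ((1 + delta^2 - 2*delta*cos u)/(1-delta^2))) x).
  { intros x. apply (ex_derive_continuous (fun u => ln ((1 + delta^2 - 2*delta*cos u)/(1-delta^2)))).
    pose proof (den_pos delta x Hd'). assert (0 < 1 - delta^2) by nra.
    auto_derive. simpl in *. apply Rdiv_lt_0_compat; lra. }
  transitivity (RInt (fun y => plus (plus (plus (scal (-(1/2)*ln L) (f_WC delta y))
       (f_WC delta y * ln (Wf L y)))
       (scal (-1) (f_WC delta y * ln((1+delta^2-2*delta*cos y)/(1-delta^2)))))
       (f_WC delta y * e y)) (-PI) PI).
  - apply RInt_ext. intros x _. unfold scal at 1; simpl; unfold mult; simpl.
    rewrite (point g L x Hgamma Hlambda). fold delta. unfold e.
    unfold plus, scal; simpl; unfold mult; simpl. ring.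
  - rewrite !(@RInt_plus R_CompleteNormedModule).
    rewrite !(@RInt_scal R_CompleteNormedModule).
    rewrite int_WC by auto. unfold Wf. rewrite intB by auto. rewrite intA by auto.
    unfold E_WC. unfold plus, scal; simpl; unfold mult; simpl. ring.
    all: assert (eA := exRI_WC delta (fun u => ln ((1 + delta^2 - 2*delta*cos u)/(1-delta^2))) Hd' CA).
    all: assert (eW := exRI_WC delta (fun u => ln (Wf L u)) Hd' CW).
    all: assert (eE := exRI_WC delta e Hd' Ce).
    all: assert (eF : ex_RInt (f_WC delta) (-PI) PI) by (apply exRI; intros; apply fWC_cont; lra).
    + exact eA.
    + exact eF.
    + apply (@ex_RInt_scal R_CompleteNormedModule). exact eF.
    + exact eW.
    + apply (@ex_RInt_plus R_CompleteNormedModule). apply (@ex_RInt_scal R_CompleteNormedModule). exact eF. exact eW.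
    + apply (@ex_RInt_scal R_CompleteNormedModule). exact eA.
    + apply (@ex_RInt_plus R_CompleteNormedModule). apply (@ex_RInt_plus R_CompleteNormedModule).
      apply (@ex_RInt_scal R_CompleteNormedModule). exact eF. exact eW.
      apply (@ex_RInt_scal R_CompleteNormedModule). exact eA.
    + exact eE.
Qed.
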